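(* Let $f:M\to\mathbb{R}^3$ be an immersion with eq\''uiaffine transversal vector field $\xi$ and positive definite induced bilinear form $h$, let $(u,v)$ be isothermal coordinates centered at an umbilical point $(0,0)$ of order $\ge k$, with $\lambda_0=b_{11}(0,0)=b_{22}(0,0)\neq0$, and set $q_0=f(0,0)+\lambda_0^{-1}\xi(0,0)$. Let $\nu$ be the co-normal, $p=\nu\cdot(f-q_0)$, $\mathcal{P}=(p_{uu}-p_{vv},2p_{uv})$ and $\mathcal{B}=(b_{11}-b_{22},2b_{12})$. Then $$J_k\mathcal{P}=\lambda_0^{-1}\delta_0\,J_k\mathcal{B},$$ where $J_k$ denotes the $k$-jet at $(0,0)$ and $\delta_0=\delta(0,0)$ with $\delta=[f_u,f_v,\xi][\nu,\nu_u,\nu_v]/\rho$.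
   Context: $D$ is the flat connection of $\mathbb{R}^3$; $h$ and the shape operator $B$ are defined by $D_Xf_*Y=f_*(\nabla_XY)+h(X,Y)\xi$, $D_X\xi=-f_*(BX)+\tau(X)\xi$, eq\''uiaffine meaning $\tau=0$. Isothermal coordinates: $h(\partial_u,\partial_u)=h(\partial_v,\partial_v)=\rho$, $h(\partial_u,\partial_v)=0$. The matrix of $B$ is given by $\xi_u=-b_{11}f_u-b_{21}f_v$, $\xi_v=-b_{12}f_u-b_{22}f_v$ (with $b_{12}=b_{21}$). Umbilical: $B$ a multiple of the identity; order $\ge k$ means the $(k-1)$-jet of $\mathcal{B}$ at $(0,0)$ vanishes. The co-normal $\nu$ satisfies $\nu\cdot f_u=\nu\cdot f_v=0$, $\nu\cdot\xi=1$; $[a,b,c]$ is the determinant of three vectors. *)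

(* Defs.v *)
From Stdlib Require Import Reals List.
From Coquelicot Require Import Coquelicot.
Open Scope R_scope.

Definition sfun := R -> R -> R.

Definition du (g : sfun) : sfun := fun u v => Derive (fun t => g t v) u.
Definition dv (g : sfun) : sfun := fun u v => Derive (fun t => g u t) v.

(** Iterated partial derivative along a word (true = d/du, false = d/dv),
    the head of the list being applied last. *)
Fixpoint dword (w : list bool) (g : sfun) : sfun :=
  match w with
  | nil => g
  | b :: w' => (if b then du else dv) (dword w' g)
  end.

Definition Dpart (i j : nat) (g : sfun) : sfun :=
  Nat.iter i du (Nat.iter j dv g).

Definition coord_disc (r u v : R) : Prop := u ^ 2 + v ^ 2 < r ^ 2.

Definition smooth_on (r : R) (g : sfun) : Prop :=
  forall (w : list bool) (u v : R), coord_disc r u v ->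
    continuity_2d_pt (dword w g) u v /\
    ex_derive (fun t => dword w g t v) u /\
    ex_derive (fun t => dword w g u t) v.

Definition vec := (R * R * R)%type.
Definition vx (a : vec) : R := fst (fst a).
Definition vy (a : vec) : R := snd (fst a).
Definition vz (a : vec) : R := snd a.
Definition vadd (a b : vec) : vec := (vx a + vx b, vy a + vy b, vz a + vz b).
Definition vscal (c : R) (a : vec) : vec := (c * vx a, c * vy a, c * vz a).
Definition dot (a b : vec) : R := vx a * vx b + vy a * vy b + vz a * vz b.
(** [a,b,c] = det of the three vectors (= a . (b x c)). *)
Definition det3 (a b c : vec) : R :=
  vx a * (vy b * vz c - vz b * vy c)
  - vy a * (vx b * vz c - vz b * vx c)
  + vz a * (vx b * vy c - vy b * vx c).

Definition vfun := R -> R -> vec.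
Definition compx (F : vfun) : sfun := fun u v => vx (F u v).
Definition compy (F : vfun) : sfun := fun u v => vy (F u v).
Definition compz (F : vfun) : sfun := fun u v => vz (F u v).
Definition vdu (F : vfun) : vfun :=
  fun u v => (du (compx F) u v, du (compy F) u v, du (compz F) u v).
Definition vdv (F : vfun) : vfun :=
  fun u v => (dv (compx F) u v, dv (compy F) u v, dv (compz F) u v).

Definition vsmooth_on (r : R) (F : vfun) : Prop :=
  smooth_on r (compx F) /\ smooth_on r (compy F) /\ smooth_on r (compz F).

Definition jet_eq_scaled (k : nat) (P1 P2 : sfun) (c : R) (B1 B2 : sfun) : Prop :=
  forall i j : nat, (i + j <= k)%nat ->
    Dpart i j P1 0 0 = c * Dpart i j B1 0 0 /\
    Dpart i j P2 0 0 = c * Dpart i j B2 0 0.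

(** The l-jet of (B1,B2) at (0,0) vanishes, for l = k-1 (vacuous if k = 0):
    all partial derivatives of order < k vanish at (0,0). *)
Definition jet_vanishes_below (k : nat) (B1 B2 : sfun) : Prop :=
  forall i j : nat, (i + j < k)%nat ->
    Dpart i j B1 0 0 = 0 /\ Dpart i j B2 0 0 = 0.

(* Main.v *)
Require Import Defs.
From Stdlib Require Import Reals Lra Lia Psatz List.
From Coquelicot Require Import Coquelicot.
Open Scope R_scope.
Import ListNotations.

Definition onD (r : R) (F G : sfun) := forall u v, coord_disc r u v -> F u v = G u v.

Lemma disc_loc r u v : coord_disc r u v -> locally_2d (coord_disc r) u v.
Proof.
  unfold coord_disc; intros H.
  set (d := r^2 - u^2 - v^2).
  assert (Hd : d > 0) by (unfold d; lra).
  set (M := 2*Rabs u + 2*Rabs v + 2).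
  assert (HM : M > 0) by (unfold M; pose proof (Rabs_pos u); pose proof (Rabs_pos v); lra).
  assert (He : 0 < Rmin 1 (d/M)).
  { apply Rmin_glb_lt; [lra|]. apply Rdiv_lt_0_compat; lra. }
  exists (mkposreal _ He). simpl. intros s t Hs Ht.
  assert (E1 : Rmin 1 (d/M) <= 1) by apply Rmin_l.
  assert (E2 : Rmin 1 (d/M) <= d/M) by apply Rmin_r.
  set (e := Rmin 1 (d/M)) in *.
  assert (E3 : e * M <= d).
  { apply Rmult_le_reg_r with (/M). apply Rinv_0_lt_compat; lra.
    rewrite Rmult_assoc, Rinv_r by lra. lra. }
  set (a := s - u) in *. set (b := t - v) in *.
  replace s with (u + a) by (unfold a; ring).
  replace t with (v + b) by (unfold b; ring).
  assert (Ha1 : u * a <= Rabs u * e).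
  { apply Rle_trans with (Rabs (u*a)). apply Rle_abs. rewrite Rabs_mult.
    apply Rmult_le_compat_l. apply Rabs_pos. lra. }
  assert (Hb1 : v * b <= Rabs v * e).
  { apply Rle_trans with (Rabs (v*b)). apply Rle_abs. rewrite Rabs_mult.
    apply Rmult_le_compat_l. apply Rabs_pos. lra. }
  assert (Ha2 : a * a < e).
  { assert (a*a = Rabs a * Rabs a) by (rewrite <- Rabs_mult; rewrite Rabs_right; nra).
    pose proof (Rabs_pos a). nra. }
  assert (Hb2 : b * b < e).
  { assert (b*b = Rabs b * Rabs b) by (rewrite <- Rabs_mult; rewrite Rabs_right; nra).
    pose proof (Rabs_pos b). nra. }
  unfold M, d in *. nra.
Qed.

Lemma disc_loc_u r u v : coord_disc r u v -> locally u (fun t => coord_disc r t v).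
Proof. intros H; apply locally_2d_1d_const_y, disc_loc, H. Qed.
Lemma disc_loc_v r u v : coord_disc r u v -> locally v (fun t => coord_disc r u t).
Proof. intros H; apply locally_2d_1d_const_x, disc_loc, H. Qed.

Definition dd (b : bool) : sfun -> sfun := if b then du else dv.

Lemma dword_cons b w F : dword (b :: w) F = dd b (dword w F).
Proof. destruct b; reflexivity. Qed.

Lemma dword_app w w' F : dword w (dword w' F) = dword (w ++ w') F.
Proof. induction w as [|b w IH]; simpl; [reflexivity|]. rewrite IH; reflexivity. Qed.

Lemma dd_ext r b F G : onD r F G -> onD r (dd b F) (dd b G).
Proof.
  intros H u v Hd; destruct b; unfold dd, du, dv; apply Derive_ext_loc.
  - eapply filter_imp; [|apply disc_loc_u, Hd]. intros t Ht; apply H, Ht.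
  - eapply filter_imp; [|apply disc_loc_v, Hd]. intros t Ht; apply H, Ht.
Qed.

Lemma dword_ext r w F G : onD r F G -> onD r (dword w F) (dword w G).
Proof.
  induction w as [|b w IH]; intros H; [exact H|].
  rewrite !dword_cons; apply dd_ext, IH, H.
Qed.

Definition Pt (F : sfun) u v :=
  continuity_2d_pt F u v /\ ex_derive (fun t => F t v) u /\ ex_derive (fun t => F u t) v.

Definition SmN (r : R) (n : nat) (F : sfun) : Prop :=
  forall w, (length w <= n)%nat -> forall u v, coord_disc r u v -> Pt (dword w F) u v.

Lemma Pt_ext r F G u v : onD r F G -> coord_disc r u v -> Pt F u v -> Pt G u v.
Proof.
  intros H Hd [H1 [H2 H3]]; split; [|split].
  - eapply continuity_2d_pt_ext_loc; [|exact H1].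
    eapply locally_2d_impl; [|apply disc_loc, Hd]. apply locally_2d_forall. intros; apply H; auto.
  - eapply ex_derive_ext_loc; [|exact H2].
    eapply filter_imp; [|apply disc_loc_u, Hd]. intros t Ht; apply H, Ht.
  - eapply ex_derive_ext_loc; [|exact H3].
    eapply filter_imp; [|apply disc_loc_v, Hd]. intros t Ht; apply H, Ht.
Qed.

Lemma SmN_ext r n F G : onD r F G -> SmN r n F -> SmN r n G.
Proof.
  intros H HF w Hw u v Hd. apply (Pt_ext r (dword w F) (dword w G) u v).
  apply dword_ext, H. exact Hd. apply HF; auto.
Qed.

Lemma SmN_le r m n F : (m <= n)%nat -> SmN r n F -> SmN r m F.
Proof. intros Hmn HF w Hw; apply HF; lia. Qed.

Lemma SmN_dd r n b F : SmN r (S n) F -> SmN r n (dd b F).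
Proof.
  intros HF w Hw u v Hd.
  assert (E : dword w (dd b F) = dword (w ++ [b]) F).
  { rewrite <- dword_app. destruct b; reflexivity. }
  rewrite E. apply HF; auto. rewrite length_app; simpl; lia.
Qed.

Lemma SmN_step r n F : SmN r 0 F -> (forall b, SmN r n (dd b F)) -> SmN r (S n) F.
Proof.
  intros H0 HS w Hw u v Hd.
  destruct w as [|b0 w0].
  - apply H0; simpl; auto.
  - destruct (exists_last (l := b0 :: w0)) as [w' [b Eb]]; [discriminate|].
    rewrite Eb in Hw |- *.
    rewrite <- dword_app.
    assert (E : dword [b] F = dd b F) by (destruct b; reflexivity).
    rewrite E. apply HS; auto.
    rewrite length_app in Hw; simpl in Hw; lia.
Qed.

Lemma SmN0_pt r F u v : SmN r 0 F -> coord_disc r u v -> Pt F u v.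
Proof. intros H Hd; apply (H nil); simpl; auto. Qed.

Lemma Pt_dd r n b F u v : SmN r (S n) F -> coord_disc r u v -> Pt (dd b F) u v.
Proof. intros H Hd. apply (SmN0_pt r). apply SmN_le with n; [lia|]. apply SmN_dd, H. auto. Qed.

Lemma ex_dd (b : bool) F u v : Pt F u v ->
  ex_derive (fun t => F t v) u /\ ex_derive (fun t => F u t) v.
Proof. intros [_ [A B]]; auto. Qed.

Lemma dd_plus r b F G : SmN r 0 F -> SmN r 0 G ->
  onD r (dd b (fun u v => F u v + G u v)) (fun u v => dd b F u v + dd b G u v).
Proof.
  intros HF HG u v Hd. destruct (SmN0_pt r F u v HF Hd) as [_ [F1 F2]].
  destruct (SmN0_pt r G u v HG Hd) as [_ [G1 G2]].
  destruct b; unfold dd, du, dv.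
  apply (Derive_plus (fun t => F t v) (fun t => G t v)); auto.
  apply (Derive_plus (fun t => F u t) (fun t => G u t)); auto.
Qed.

Lemma dd_mult r b F G : SmN r 0 F -> SmN r 0 G ->
  onD r (dd b (fun u v => F u v * G u v)) (fun u v => dd b F u v * G u v + F u v * dd b G u v).
Proof.
  intros HF HG u v Hd. destruct (SmN0_pt r F u v HF Hd) as [_ [F1 F2]].
  destruct (SmN0_pt r G u v HG Hd) as [_ [G1 G2]].
  destruct b; unfold dd, du, dv.
  apply (Derive_mult (fun t => F t v) (fun t => G t v)); auto.
  apply (Derive_mult (fun t => F u t) (fun t => G u t)); auto.
Qed.

Lemma dd_inv r b F : SmN r 0 F -> (forall u v, coord_disc r u v -> F u v <> 0) ->
  onD r (dd b (fun u v => / F u v)) (fun u v => - dd b F u v * (/ F u v) * (/ F u v)).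
Proof.
  intros HF Hn u v Hd. destruct (SmN0_pt r F u v HF Hd) as [_ [F1 F2]].
  specialize (Hn u v Hd).
  destruct b; unfold dd, du, dv.
  rewrite (Derive_inv (fun t => F t v)); auto; field; auto.
  rewrite (Derive_inv (fun t => F u t)); auto; field; auto.
Qed.

Lemma dd_const b c : forall u v, dd b (fun _ _ => c) u v = 0.
Proof. intros; destruct b; unfold dd, du, dv; apply Derive_const. Qed.

Lemma SmN0_of r H : (forall u v, coord_disc r u v -> Pt H u v) -> SmN r 0 H.
Proof. intros P w Hw. destruct w; [|simpl in Hw; lia]. exact P. Qed.

Lemma Pt_plus F G u v : Pt F u v -> Pt G u v -> Pt (fun u v => F u v + G u v) u v.
Proof.
  intros [F0 [F1 F2]] [G0 [G1 G2]].
  split; [|split]. apply continuity_2d_pt_plus; auto.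
  apply (ex_derive_plus (fun t => F t v) (fun t => G t v)); auto.
  apply (ex_derive_plus (fun t => F u t) (fun t => G u t)); auto.
Qed.

Lemma Pt_mult F G u v : Pt F u v -> Pt G u v -> Pt (fun u v => F u v * G u v) u v.
Proof.
  intros [F0 [F1 F2]] [G0 [G1 G2]].
  split; [|split]. apply continuity_2d_pt_mult; auto.
  apply (ex_derive_mult (fun t => F t v) (fun t => G t v)); auto.
  apply (ex_derive_mult (fun t => F u t) (fun t => G u t)); auto.
Qed.

Lemma Pt_inv F u v : Pt F u v -> F u v <> 0 -> Pt (fun u v => / F u v) u v.
Proof.
  intros [F0 [F1 F2]] Hn.
  split; [|split]. apply continuity_2d_pt_inv; auto.
  apply (ex_derive_inv (fun t => F t v)); auto.
  apply (ex_derive_inv (fun t => F u t)); auto.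
Qed.

Lemma Pt_const c u v : Pt (fun _ _ => c) u v.
Proof.
  split; [|split]. apply continuity_2d_pt_const. apply ex_derive_const. apply ex_derive_const.
Qed.

Lemma SmN_plus r n : forall F G, SmN r n F -> SmN r n G -> SmN r n (fun u v => F u v + G u v).
Proof.
  induction n as [|n IH]; intros F G HF HG.
  - apply SmN0_of; intros u v Hd; apply Pt_plus; apply SmN0_pt with r; auto.
  - apply SmN_step.
    + apply SmN0_of; intros u v Hd; apply Pt_plus; apply SmN0_pt with r; auto;
      apply SmN_le with (S n); auto; lia.
    + intros b. eapply SmN_ext.
      { intros u v Hd. symmetry. apply (dd_plus r b F G); auto;
        apply SmN_le with (S n); auto; lia. }
      apply IH; apply SmN_dd; auto.
Qed.

Lemma SmN_mult r n : forall F G, SmN r n F -> SmN r n G -> SmN r n (fun u v => F u v * G u v).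
Proof.
  induction n as [|n IH]; intros F G HF HG.
  - apply SmN0_of; intros u v Hd; apply Pt_mult; apply SmN0_pt with r; auto.
  - apply SmN_step.
    + apply SmN0_of; intros u v Hd; apply Pt_mult; apply SmN0_pt with r; auto;
      apply SmN_le with (S n); auto; lia.
    + intros b. eapply SmN_ext.
      { intros u v Hd. symmetry. apply (dd_mult r b F G); auto;
        apply SmN_le with (S n); auto; lia. }
      apply SmN_plus; apply IH; try (apply SmN_dd; auto); apply SmN_le with (S n); auto.
Qed.

Lemma SmN_const r n c : SmN r n (fun _ _ => c).
Proof.
  revert c; induction n as [|n IH]; intros c.
  - apply SmN0_of; intros; apply Pt_const.
  - apply SmN_step. apply SmN0_of; intros; apply Pt_const.
    intros b. apply SmN_ext with (fun _ _ => 0); [|apply IH]. intros u v _.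
    rewrite dd_const. reflexivity.
Qed.

Lemma SmN_opp r n F : SmN r n F -> SmN r n (fun u v => - F u v).
Proof.
  intros H. apply SmN_ext with (fun u v => (fun _ _ => -1) u v * F u v).
  intros u v _; ring. apply SmN_mult; auto using SmN_const.
Qed.

Lemma SmN_inv r n : forall F, SmN r n F -> (forall u v, coord_disc r u v -> F u v <> 0) ->
  SmN r n (fun u v => / F u v).
Proof.
  induction n as [|n IH]; intros F HF Hn.
  - apply SmN0_of; intros u v Hd; apply Pt_inv; auto; apply SmN0_pt with r; auto.
  - apply SmN_step.
    + apply SmN0_of; intros u v Hd; apply Pt_inv; auto; apply SmN0_pt with r; auto;
      apply SmN_le with (S n); auto; lia.
    + intros b. eapply SmN_ext.
      { intros u v Hd. symmetry. apply (dd_inv r b F); auto;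
        apply SmN_le with (S n); auto; lia. }
      assert (HI : SmN r n (fun u v => / F u v)) by (apply IH; auto; apply SmN_le with (S n); auto).
      apply SmN_mult; auto. apply SmN_mult; auto. apply SmN_opp. apply SmN_dd; auto.
Qed.

Definition Sm r F := forall n, SmN r n F.

Lemma smooth_Sm r F : smooth_on r F -> Sm r F.
Proof. intros H n w _ u v Hd. apply H, Hd. Qed.

Lemma Sm_ext r F G : onD r F G -> Sm r F -> Sm r G.
Proof. intros H HF n; apply SmN_ext with F; auto. Qed.
Lemma Sm_plus r F G : Sm r F -> Sm r G -> Sm r (fun u v => F u v + G u v).
Proof. intros HF HG n; apply SmN_plus; auto. Qed.
Lemma Sm_mult r F G : Sm r F -> Sm r G -> Sm r (fun u v => F u v * G u v).
Proof. intros HF HG n; apply SmN_mult; auto. Qed.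
Lemma Sm_const r c : Sm r (fun _ _ => c).
Proof. intros n; apply SmN_const. Qed.
Lemma Sm_opp r F : Sm r F -> Sm r (fun u v => - F u v).
Proof. intros HF n; apply SmN_opp; auto. Qed.
Lemma Sm_minus r F G : Sm r F -> Sm r G -> Sm r (fun u v => F u v - G u v).
Proof. intros HF HG. apply Sm_ext with (fun u v => F u v + (fun u v => - G u v) u v).
  intros u v _; ring. apply Sm_plus; auto; apply Sm_opp; auto. Qed.
Lemma Sm_inv r F : Sm r F -> (forall u v, coord_disc r u v -> F u v <> 0) -> Sm r (fun u v => / F u v).
Proof. intros HF Hn n; apply SmN_inv; auto. Qed.
Lemma Sm_div r F G : Sm r F -> Sm r G -> (forall u v, coord_disc r u v -> G u v <> 0) ->
  Sm r (fun u v => F u v / G u v).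
Proof. intros HF HG Hn. unfold Rdiv. apply (Sm_mult r F (fun u v => / G u v)); auto. apply Sm_inv; auto. Qed.
Lemma Sm_dd r b F : Sm r F -> Sm r (dd b F).
Proof. intros HF n; apply SmN_dd; auto. Qed.
Lemma Sm_du r F : Sm r F -> Sm r (du F).
Proof. apply (Sm_dd r true). Qed.
Lemma Sm_dv r F : Sm r F -> Sm r (dv F).
Proof. apply (Sm_dd r false). Qed.
Lemma Sm_dword r w F : Sm r F -> Sm r (dword w F).
Proof. induction w as [|b w IH]; intros H; [exact H|]. rewrite dword_cons. apply Sm_dd, IH, H. Qed.
Lemma Sm_pt r F u v : Sm r F -> coord_disc r u v -> Pt F u v.
Proof. intros H Hd. apply SmN0_pt with r; auto. Qed.

Lemma Sm_schwarz r F u v : Sm r F -> coord_disc r u v -> du (dv F) u v = dv (du F) u v.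
Proof.
  intros HF Hd. unfold du, dv. apply Schwarz.
  - eapply locally_2d_impl; [|apply disc_loc, Hd]. apply locally_2d_forall.
    intros s t Hst.
    destruct (Sm_pt r F s t HF Hst) as [_ [A B]].
    destruct (Sm_pt r (dv F) s t (Sm_dv r F HF) Hst) as [_ [C _]].
    destruct (Sm_pt r (du F) s t (Sm_du r F HF) Hst) as [_ [_ D]].
    repeat split; auto.
  - destruct (Sm_pt r (du (dv F)) u v (Sm_du r _ (Sm_dv r F HF)) Hd) as [A _]. exact A.
  - destruct (Sm_pt r (dv (du F)) u v (Sm_dv r _ (Sm_du r F HF)) Hd) as [A _]. exact A.
Qed.

Lemma dword_snoc w b F : dword (w ++ [b]) F = dword w (dd b F).
Proof. rewrite <- dword_app. destruct b; reflexivity. Qed.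

Lemma dw_plus r w F G : Sm r F -> Sm r G ->
  onD r (dword w (fun u v => F u v + G u v)) (fun u v => dword w F u v + dword w G u v).
Proof.
  intros HF HG. induction w as [|b w IH]; [intros u v _; reflexivity|].
  intros u v Hd. rewrite !dword_cons.
  rewrite (dd_ext r b _ _ IH u v Hd).
  apply (dd_plus r b (dword w F) (dword w G)); auto; apply Sm_dword; auto.
Qed.

Lemma dw_scal r w c F : Sm r F ->
  onD r (dword w (fun u v => c * F u v)) (fun u v => c * dword w F u v).
Proof.
  intros HF. induction w as [|b w IH]; [intros u v _; reflexivity|].
  intros u v Hd. rewrite !dword_cons.
  rewrite (dd_ext r b _ _ IH u v Hd).
  destruct b; unfold dd, du, dv; apply Derive_scal.
Qed.

Lemma dw_const w c : w <> nil -> forall u v, dword w (fun _ _ => c) u v = 0.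
Proof.
  destruct w as [|b w]; [congruence|]. intros _. revert b.
  induction w as [|b' w IH]; intros b u v.
  - destruct b; unfold dword, du, dv; apply Derive_const.
  - rewrite dword_cons.
    destruct b; unfold dd, du, dv.
    + rewrite (Derive_ext _ (fun _ => 0)); [apply Derive_const| intros; apply IH].
    + rewrite (Derive_ext _ (fun _ => 0)); [apply Derive_const| intros; apply IH].
Qed.

Lemma dw_opp r w F : Sm r F ->
  onD r (dword w (fun u v => - F u v)) (fun u v => - dword w F u v).
Proof.
  intros HF u v Hd. rewrite (dword_ext r w _ (fun u v => -1 * F u v)); auto.
  rewrite (dw_scal r); auto. ring. intros s t _; ring.
Qed.

Lemma dw_minus r w F G : Sm r F -> Sm r G ->
  onD r (dword w (fun u v => F u v - G u v)) (fun u v => dword w F u v - dword w G u v).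
Proof.
  intros HF HG u v Hd. rewrite (dword_ext r w _ (fun u v => F u v + (fun s t => - G s t) u v)); auto.
  rewrite (dw_plus r); auto. rewrite (dw_opp r); auto. apply Sm_opp; auto. intros s t _; ring.
Qed.

Definition V (n : nat) (A : sfun) := forall w, (length w < n)%nat -> dword w A 0 0 = 0.

Lemma disc0 r : 0 < r -> coord_disc r 0 0.
Proof. unfold coord_disc; intros; nra. Qed.

Lemma V_mult_aux r : 0 < r -> forall m A B n1 n2, Sm r A -> Sm r B -> V n1 A -> V n2 B ->
  forall w, length w = m -> (m < n1 + n2)%nat -> dword w (fun u v => A u v * B u v) 0 0 = 0.
Proof.
  intros Hr. induction m as [|m IH]; intros A B n1 n2 HA HB VA VB w Hw Hm.
  - destruct w; [|simpl in Hw; lia]. simpl.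
    destruct n1 as [|n1].
    + assert (H := VB nil). simpl in H. rewrite H; [ring|lia].
    + assert (H := VA nil). simpl in H. rewrite H; [ring|lia].
  - destruct w as [|b0 w0]; [simpl in Hw; lia|].
    destruct (exists_last (l := b0 :: w0)) as [w' [b Eb]]; [discriminate|].
    rewrite Eb in Hw |- *. rewrite length_app in Hw; simpl in Hw.
    rewrite dword_snoc.
    rewrite (dword_ext r w' _ _ (dd_mult r b A B (HA 0%nat) (HB 0%nat))); [|apply disc0; auto].
    rewrite (dw_plus r); [| apply Sm_mult; auto using Sm_dd | apply Sm_mult; auto using Sm_dd | apply disc0; auto].
    assert (VA' : V (pred n1) (dd b A)).
    { intros w1 Hw1. rewrite <- dword_snoc. apply VA. rewrite length_app; simpl; lia. }
    assert (VB' : V (pred n2) (dd b B)).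
    { intros w1 Hw1. rewrite <- dword_snoc. apply VB. rewrite length_app; simpl; lia. }
    assert (Hw' : length w' = m) by lia. clear Hw.
    rewrite (IH (dd b A) B (pred n1) n2 (Sm_dd r b A HA) HB VA' VB w' Hw'); [|lia].
    rewrite (IH A (dd b B) n1 (pred n2) HA (Sm_dd r b B HB) VA VB' w' Hw'); [ring|lia].
Qed.

Lemma V_mult r A B n1 n2 : 0 < r -> Sm r A -> Sm r B -> V n1 A -> V n2 B ->
  V (n1 + n2) (fun u v => A u v * B u v).
Proof. intros Hr HA HB VA VB w Hw. eapply V_mult_aux; eauto. Qed.

Fixpoint nt (w : list bool) : nat := match w with nil => 0%nat | b :: w' => if b then S (nt w') else nt w' end.
Fixpoint nf (w : list bool) : nat := match w with nil => 0%nat | b :: w' => if b then nf w' else S (nf w') end.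

Lemma len_ntf w : length w = (nt w + nf w)%nat.
Proof. induction w as [|b w IH]; simpl; [auto|destruct b; lia]. Qed.

Lemma Sm_iter_du r i X : Sm r X -> Sm r (Nat.iter i du X).
Proof. induction i; simpl; auto. intros; apply Sm_du; auto. Qed.
Lemma Sm_iter_dv r i X : Sm r X -> Sm r (Nat.iter i dv X).
Proof. induction i; simpl; auto. intros; apply Sm_dv; auto. Qed.

Lemma dv_iter_du r i X : Sm r X -> onD r (dv (Nat.iter i du X)) (Nat.iter i du (dv X)).
Proof.
  intros HX. induction i as [|i IH]; [intros u v _; reflexivity|].
  intros u v Hd. simpl.
  rewrite <- (Sm_schwarz r (Nat.iter i du X) u v); auto using Sm_iter_du.
  apply (dd_ext r true _ _ IH u v Hd).
Qed.

Lemma dword_Dpart r w F : Sm r F -> onD r (dword w F) (Dpart (nt w) (nf w) F).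
Proof.
  intros HF. induction w as [|b w IH]; [intros u v _; reflexivity|].
  intros u v Hd. rewrite dword_cons. rewrite (dd_ext r b _ _ IH u v Hd).
  destruct b; simpl; [reflexivity|].
  unfold Dpart. apply (dv_iter_du r (nt w) _); auto using Sm_iter_dv.
Qed.

Lemma jet_V r k B1 B2 : 0 < r -> Sm r B1 -> Sm r B2 -> jet_vanishes_below k B1 B2 -> V k B1 /\ V k B2.
Proof.
  intros Hr H1 H2 J. split; intros w Hw; rewrite (dword_Dpart r); auto using disc0;
  rewrite len_ntf in Hw; apply J; auto.
Qed.

Definition comb (a c e : R) (U V W : vec) : vec := vadd (vadd (vscal a U) (vscal c V)) (vscal e W).

Lemma vec_eq (a b : vec) : vx a = vx b -> vy a = vy b -> vz a = vz b -> a = b.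
Proof. destruct a as [[a1 a2] a3], b as [[b1 b2] b3]; unfold vx, vy, vz; simpl; intros; subst; auto. Qed.

Lemma cramer a c e U V W :
  det3 (comb a c e U V W) V W = a * det3 U V W /\
  det3 U (comb a c e U V W) W = c * det3 U V W /\
  det3 U V (comb a c e U V W) = e * det3 U V W.
Proof.
  destruct U as [[u1 u2] u3], V as [[v1 v2] v3], W as [[w1 w2] w3].
  unfold comb, det3, vadd, vscal, vx, vy, vz; simpl; repeat split; ring.
Qed.

Lemma solve3 a c e a' c' e' U V W : det3 U V W <> 0 ->
  comb a c e U V W = comb a' c' e' U V W -> a = a' /\ c = c' /\ e = e'.
Proof.
  intros HD H. destruct (cramer a c e U V W) as [A1 [A2 A3]].
  destruct (cramer a' c' e' U V W) as [B1 [B2 B3]].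
  rewrite H in A1, A2, A3.
  repeat split; apply Rmult_eq_reg_r with (det3 U V W); auto; congruence.
Qed.

Lemma decomp U V W X : det3 U V W <> 0 ->
  X = comb (det3 X V W / det3 U V W) (det3 U X W / det3 U V W) (det3 U V X / det3 U V W) U V W.
Proof.
  intros HD. revert HD.
  destruct U as [[u1 u2] u3], V as [[v1 v2] v3], W as [[w1 w2] w3], X as [[x1 x2] x3].
  unfold comb, det3, vadd, vscal, vx, vy, vz; simpl; intros HD.
  f_equal; [f_equal|]; field; auto.
Qed.

Definition cross (a b : vec) : vec :=
  (vy a * vz b - vz a * vy b, vz a * vx b - vx a * vz b, vx a * vy b - vy a * vx b).

Lemma triple_id n U V W : vscal (det3 U V W) n =
  vadd (vadd (vscal (dot n U) (cross V W)) (vscal (dot n V) (cross W U))) (vscal (dot n W) (cross U V)).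
Proof.
  destruct U as [[u1 u2] u3], V as [[v1 v2] v3], W as [[w1 w2] w3], n as [[x1 x2] x3].
  unfold cross, dot, det3, vadd, vscal, vx, vy, vz; simpl; f_equal; [f_equal|]; ring.
Qed.

Lemma conormal_eq n U V W : det3 U V W <> 0 -> dot n U = 0 -> dot n V = 0 -> dot n W = 1 ->
  n = vscal (/ det3 U V W) (cross U V).
Proof.
  intros HD H1 H2 H3. pose proof (triple_id n U V W) as T.
  rewrite H1, H2, H3 in T. revert T HD.
  generalize (det3 U V W). intros d T HD.
  destruct (cross U V) as [[c1 c2] c3], (cross V W) as [[e1 e2] e3], (cross W U) as [[g1 g2] g3], n as [[x1 x2] x3].
  unfold vadd, vscal, vx, vy, vz in *; simpl in *.
  injection T; intros E3 E2 E1.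
  f_equal; [f_equal|]; apply Rmult_eq_reg_l with d; auto; field_simplify; auto; lra.
Qed.

Lemma dot_comb n a c e U V W : dot n (comb a c e U V W) = a * dot n U + c * dot n V + e * dot n W.
Proof.
  destruct U as [[u1 u2] u3], V as [[v1 v2] v3], W as [[w1 w2] w3], n as [[x1 x2] x3].
  unfold comb, dot, vadd, vscal, vx, vy, vz; simpl; ring.
Qed.

Lemma binet N P Q U V W :
  det3 (dot N U, dot N V, dot N W) (dot P U, dot P V, dot P W) (dot Q U, dot Q V, dot Q W)
  = det3 N P Q * det3 U V W.
Proof.
  destruct U as [[u1 u2] u3], V as [[v1 v2] v3], W as [[w1 w2] w3], N as [[x1 x2] x3],
    P as [[p1 p2] p3], Q as [[q1 q2] q3].
  unfold dot, det3, vx, vy, vz; simpl; ring.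
Qed.

Lemma V_mono n m A : (m <= n)%nat -> V n A -> V m A.
Proof. intros H VA w Hw; apply VA; lia. Qed.

Lemma V0 A : V 0 A.
Proof. intros w Hw; lia. Qed.

Lemma eval_lin r m c g0 g b al X be Y w : 0 < r ->
  Sm r g -> Sm r b -> Sm r al -> Sm r X -> Sm r be -> Sm r Y ->
  V (S m) al -> V (S m) be -> V (S (S m)) (fun u v => g u v - g0) -> (length w <= m)%nat ->
  dword w (fun u v => c + g u v * b u v - al u v * X u v - be u v * Y u v) 0 0
  = dword w (fun u v => c + g0 * b u v) 0 0.
Proof.
  intros Hr Hg Hb Ha HX Hbe HY Va Vb Vg Hw.
  pose proof (disc0 r Hr) as D0.
  rewrite (dword_ext r w _ (fun u v => ((fun u v => c + g0 * b u v) u v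
      + (fun u v => (fun u v => g u v - g0) u v * b u v) u v)
      - (fun u v => al u v * X u v) u v - (fun u v => be u v * Y u v) u v)); auto;
    [| intros u v _; ring].
  assert (S1 : Sm r (fun u v => c + g0 * b u v)).
  { apply Sm_plus. apply Sm_const. apply Sm_mult; auto using Sm_const. }
  assert (S2 : Sm r (fun u v => g u v - g0)) by (apply Sm_minus; auto using Sm_const).
  rewrite (dw_minus r); auto; [| apply Sm_minus; [apply Sm_plus; auto; apply Sm_mult; auto|apply Sm_mult; auto] | apply Sm_mult; auto].
  rewrite (dw_minus r); auto; [| apply Sm_plus; auto; apply Sm_mult; auto | apply Sm_mult; auto].
  rewrite (dw_plus r); auto; [| apply Sm_mult; auto].
  rewrite (V_mult r _ _ (S (S m)) 0 Hr S2 Hb Vg (V0 b)); [|lia].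
  rewrite (V_mult r _ _ (S m) 0 Hr Ha HX Va (V0 X)); [|lia].
  rewrite (V_mult r _ _ (S m) 0 Hr Hbe HY Vb (V0 Y)); [|lia].
  ring.
Qed.

Lemma cpv r w c g0 b : 0 < r -> Sm r b -> w <> nil ->
  dword w (fun u v => c + g0 * b u v) 0 0 = g0 * dword w b 0 0.
Proof.
  intros Hr Hb Hw. pose proof (disc0 r Hr) as D0.
  rewrite (dw_plus r w (fun _ _ => c) (fun u v => g0 * b u v)); auto using Sm_const;
   [| apply Sm_mult; auto using Sm_const].
  rewrite dw_const; auto. rewrite (dw_scal r); auto. ring.
Qed.

Lemma dd_subc r b F c : Sm r F -> onD r (dd b (fun u v => F u v - c)) (dd b F).
Proof.
  intros HF u v Hd. destruct (Sm_pt r F u v HF Hd) as [_ [A B]].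
  destruct b; unfold dd, du, dv.
  - rewrite (Derive_minus (fun t => F t v) (fun _ => c)); auto using ex_derive_const.
    rewrite Derive_const. change (Derive (fun t => F t v) u - 0 = Derive (fun t => F t v) u); ring.
  - rewrite (Derive_minus (fun t => F u t) (fun _ => c)); auto using ex_derive_const.
    rewrite Derive_const. change (Derive (fun t => F u t) v - 0 = Derive (fun t => F u t) v); ring.
Qed.

Lemma snoc_ne (w : list bool) (b : bool) : w ++ [b] <> nil.
Proof. destruct w; simpl; discriminate. Qed.

Lemma last_dec (w : list bool) : w = nil \/ exists w' b, w = w' ++ [b].
Proof.
  destruct w as [|b0 w0]; [left; auto|right].
  destruct (exists_last (l := b0 :: w0)) as [w' [b Eb]]; [discriminate|]. eauto.
Qed.



Ltac lenl := repeat rewrite length_app in *; cbn [length] in *; lia.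

Lemma jet_core r k (al be g rho b11 b12 b22 A1 A2 A3 C1 C2 C3 : sfun) g0 :
  0 < r -> Sm r al -> Sm r be -> Sm r g -> Sm r rho -> Sm r b11 -> Sm r b12 -> Sm r b22 ->
  Sm r A1 -> Sm r A2 -> Sm r A3 -> Sm r C1 -> Sm r C2 -> Sm r C3 ->
  onD r (du al) (fun u v => 1 + g u v * b11 u v - al u v * A1 u v - be u v * A3 u v) ->
  onD r (du be) (fun u v => 0 + g u v * b12 u v - al u v * C1 u v - be u v * C3 u v) ->
  onD r (du g) (fun u v => - (al u v * rho u v)) ->
  onD r (dv al) (fun u v => 0 + g u v * b12 u v - al u v * A3 u v - be u v * A2 u v) ->
  onD r (dv be) (fun u v => 1 + g u v * b22 u v - al u v * C3 u v - be u v * C2 u v) ->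
  onD r (dv g) (fun u v => - (be u v * rho u v)) ->
  g 0 0 = g0 -> g0 <> 0 -> 1 + g0 * b11 0 0 = 0 -> al 0 0 = 0 -> be 0 0 = 0 ->
  V k (fun u v => b11 u v - b22 u v) -> V k b12 ->
  V (S k) al /\ V (S k) be.
Proof.
  intros Hr Sal Sbe Sg Srho Sb11 Sb12 Sb22 SA1 SA2 SA3 SC1 SC2 SC3 E1 E2 E3 E4 E5 E6
    G0 Hg0 L0 al0 be0 VB1 VB2.
  pose proof (disc0 r Hr) as D0.
  assert (Sg' : Sm r (fun u v => g u v - g0)) by (apply Sm_minus; auto using Sm_const).
  assert (CA : forall m, V (S m) al -> V (S m) be -> V (S (S m)) (fun u v => g u v - g0)).
  { intros m Va Vb w Hw. destruct (last_dec w) as [->|[w' [b ->]]].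
    - simpl. rewrite G0; ring.
    - rewrite length_app in Hw; simpl in Hw.
      rewrite dword_snoc.
      rewrite (dword_ext r w' _ (dd b g)); auto.
      2: apply dd_subc; auto.
      destruct b.
      + rewrite (dword_ext r w' _ _ E3); auto.
        rewrite (dw_opp r); auto; [|apply Sm_mult; auto].
        rewrite (V_mult r _ _ (S m) 0 Hr Sal Srho Va (V0 rho)); [ring|lia].
      + rewrite (dword_ext r w' _ _ E6); auto.
        rewrite (dw_opp r); auto; [|apply Sm_mult; auto].
        rewrite (V_mult r _ _ (S m) 0 Hr Sbe Srho Vb (V0 rho)); [ring|lia]. }
  assert (HB22 : forall w, (length w < k)%nat -> dword w b22 0 0 = dword w b11 0 0).
  { intros w Hw. pose proof (VB1 w Hw) as H. rewrite (dw_minus r w b11 b22) in H; auto. lra. }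
  assert (SW : forall w F, Sm r F -> dword (w ++ [false]) (du F) 0 0 = dword (w ++ [true]) (dv F) 0 0).
  { intros w F HF. rewrite !dword_snoc. simpl.
    apply (dword_ext r w (dv (du F)) (du (dv F))); auto.
    intros u v Hd. symmetry. apply (Sm_schwarz r); auto. }
  assert (CB : forall m, (m < k)%nat -> V (S m) al -> V (S m) be ->
             forall w, w <> nil -> (length w <= m)%nat -> dword w b11 0 0 = 0).
  { intros m Hmk Va Vb w Hne Hw. pose proof (CA m Va Vb) as Vg.
    destruct (last_dec w) as [->|[w' [b ->]]]; [congruence|].
    destruct b.
    - pose proof (SW w' be Sbe) as H.
      rewrite (dword_ext r _ _ _ E2) in H; auto. rewrite (dword_ext r _ _ _ E5) in H; auto.
      rewrite (eval_lin r m _ g0) in H; auto.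
      rewrite (eval_lin r m _ g0) in H; auto.
      all: try (rewrite length_app in *; simpl in *; lia).
      rewrite !(cpv r) in H; auto using snoc_ne.
      rewrite VB2 in H; [|lenl].
      rewrite <- HB22; [|lenl].
      apply Rmult_eq_reg_l with g0; auto; lra.
    - pose proof (SW w' al Sal) as H.
      rewrite (dword_ext r _ _ _ E1) in H; auto. rewrite (dword_ext r _ _ _ E4) in H; auto.
      rewrite (eval_lin r m _ g0) in H; auto.
      rewrite (eval_lin r m _ g0) in H; auto.
      all: try (rewrite length_app in *; simpl in *; lia).
      rewrite !(cpv r) in H; auto using snoc_ne.
      rewrite VB2 in H; [|lenl].
      apply Rmult_eq_reg_l with g0; auto; lra. }
  assert (CC : forall m, (m < k)%nat -> V (S m) al -> V (S m) be -> V (S (S m)) al /\ V (S (S m)) be).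
  { intros m Hmk Va Vb. pose proof (CA m Va Vb) as Vg. pose proof (CB m Hmk Va Vb) as Bm.
    assert (b12_0 : b12 0 0 = 0) by (apply (VB2 nil); simpl; lia).
    assert (b22_0 : b22 0 0 = b11 0 0) by (apply (HB22 nil); simpl; lia).
    split; intros w Hw; destruct (last_dec w) as [->|[w' [b ->]]]; auto;
      rewrite length_app in Hw; simpl in Hw; rewrite dword_snoc; destruct b; simpl dd.
    - rewrite (dword_ext r _ _ _ E1); auto. rewrite (eval_lin r m _ g0); auto; [|lia].
      destruct (last_dec w') as [->|[w'' [b' ->]]]; [simpl; auto|].
      rewrite (cpv r); auto using snoc_ne. rewrite (Bm _ (snoc_ne _ _)); [ring|lia].
    - rewrite (dword_ext r _ _ _ E4); auto. rewrite (eval_lin r m _ g0); auto; [|lia].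
      destruct (last_dec w') as [->|[w'' [b' ->]]]; [simpl; rewrite b12_0; ring|].
      rewrite (cpv r); auto using snoc_ne. rewrite VB2; [ring|lia].
    - rewrite (dword_ext r _ _ _ E2); auto. rewrite (eval_lin r m _ g0); auto; [|lia].
      destruct (last_dec w') as [->|[w'' [b' ->]]]; [simpl; rewrite b12_0; ring|].
      rewrite (cpv r); auto using snoc_ne. rewrite VB2; [ring|lia].
    - rewrite (dword_ext r _ _ _ E5); auto. rewrite (eval_lin r m _ g0); auto; [|lia].
      destruct (last_dec w') as [->|[w'' [b' ->]]]; [simpl; rewrite b22_0; auto|].
      rewrite (cpv r); auto using snoc_ne. rewrite HB22; [|lia].
      rewrite (Bm _ (snoc_ne _ _)); [ring|lia]. }
  assert (IND : forall m, (m <= k)%nat -> V (S m) al /\ V (S m) be).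
  { induction m as [|m IH]; intros Hm.
    - split; intros w Hw; destruct w; simpl in Hw; try lia; simpl; auto.
    - destruct IH as [Va Vb]; [lia|]. apply CC; auto; lia. }
  apply IND; lia.
Qed.

Definition Vsm r (X : vfun) := Sm r (compx X) /\ Sm r (compy X) /\ Sm r (compz X).

Ltac smt := repeat first [ assumption | apply Sm_minus | apply Sm_plus | apply Sm_mult | apply Sm_opp
                         | apply Sm_const | assumption ].

Ltac sm0 := match goal with |- SmN ?r 0 ?F => cut (Sm r F); [intros HH; exact (HH 0%nat) | smt] end.

Lemma Vsm_of r X : vsmooth_on r X -> Vsm r X.
Proof. intros [A [B C]]; split; [|split]; apply smooth_Sm; auto. Qed.

Lemma Vsm_du r X : Vsm r X -> Vsm r (vdu X).
Proof. intros [A [B C]]; split; [|split]; apply Sm_du; auto. Qed.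
Lemma Vsm_dv r X : Vsm r X -> Vsm r (vdv X).
Proof. intros [A [B C]]; split; [|split]; apply Sm_dv; auto. Qed.

Definition gvec (f : vfun) (q : vec) : vfun := fun u v => vadd (f u v) (vscal (-1) q).

Lemma Vsm_g r f q : Vsm r f -> Vsm r (gvec f q).
Proof.
  intros [A [B C]]; split; [|split]; unfold compx, compy, compz, gvec, vadd, vscal; cbn [vx vy vz fst snd];
  smt.
Qed.

Lemma Sm_det r X Y Z : Vsm r X -> Vsm r Y -> Vsm r Z ->
  Sm r (fun u v => det3 (X u v) (Y u v) (Z u v)).
Proof.
  intros [X1 [X2 X3]] [Y1 [Y2 Y3]] [Z1 [Z2 Z3]]. unfold det3.
  unfold compx, compy, compz in *. smt.
Qed.

Definition Dt (f xi : vfun) : sfun := fun u v => det3 (vdu f u v) (vdv f u v) (xi u v).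
Definition cA (f xi X : vfun) : sfun := fun u v => det3 (X u v) (vdv f u v) (xi u v) / Dt f xi u v.
Definition cB (f xi X : vfun) : sfun := fun u v => det3 (vdu f u v) (X u v) (xi u v) / Dt f xi u v.
Definition cC (f xi X : vfun) : sfun := fun u v => det3 (vdu f u v) (vdv f u v) (X u v) / Dt f xi u v.

Lemma Sm_Dt r f xi : Vsm r f -> Vsm r xi -> Sm r (Dt f xi).
Proof. intros; apply Sm_det; auto using Vsm_du, Vsm_dv. Qed.

Lemma Sm_cA r f xi X : Vsm r f -> Vsm r xi -> Vsm r X ->
  (forall u v, coord_disc r u v -> Dt f xi u v <> 0) -> Sm r (cA f xi X).
Proof. intros. apply Sm_div; auto using Sm_Dt. apply Sm_det; auto using Vsm_du, Vsm_dv. Qed.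
Lemma Sm_cB r f xi X : Vsm r f -> Vsm r xi -> Vsm r X ->
  (forall u v, coord_disc r u v -> Dt f xi u v <> 0) -> Sm r (cB f xi X).
Proof. intros. apply Sm_div; auto using Sm_Dt. apply Sm_det; auto using Vsm_du, Vsm_dv. Qed.
Lemma Sm_cC r f xi X : Vsm r f -> Vsm r xi -> Vsm r X ->
  (forall u v, coord_disc r u v -> Dt f xi u v <> 0) -> Sm r (cC f xi X).
Proof. intros. apply Sm_div; auto using Sm_Dt. apply Sm_det; auto using Vsm_du, Vsm_dv. Qed.

Lemma decomp_pt f xi X u v : Dt f xi u v <> 0 ->
  X u v = comb (cA f xi X u v) (cB f xi X u v) (cC f xi X u v) (vdu f u v) (vdv f u v) (xi u v).
Proof. intros H. apply decomp. exact H. Qed.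

Lemma coef_pt f xi X u v a c e : Dt f xi u v <> 0 ->
  X u v = comb a c e (vdu f u v) (vdv f u v) (xi u v) ->
  a = cA f xi X u v /\ c = cB f xi X u v /\ e = cC f xi X u v.
Proof.
  intros HD H. apply (solve3 _ _ _ _ _ _ (vdu f u v) (vdv f u v) (xi u v) HD).
  rewrite <- H. apply decomp_pt; auto.
Qed.

Lemma comb2 a c U V W : vadd (vscal a U) (vscal c V) = comb a c 0 U V W.
Proof.
  destruct U as [[u1 u2] u3], V as [[v1 v2] v3], W as [[w1 w2] w3].
  unfold comb, vadd, vscal, vx, vy, vz; simpl; f_equal; [f_equal|]; ring.
Qed.

Lemma comp_dd r b (F0 X Y Z al be ga : sfun) c :
  Sm r F0 -> Sm r X -> Sm r Y -> Sm r Z -> Sm r al -> Sm r be -> Sm r ga ->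
  onD r (fun u v => F0 u v + c) (fun u v => al u v * X u v + be u v * Y u v + ga u v * Z u v) ->
  onD r (dd b F0) (fun u v => (dd b al u v * X u v + al u v * dd b X u v)
       + (dd b be u v * Y u v + be u v * dd b Y u v) + (dd b ga u v * Z u v + ga u v * dd b Z u v)).
Proof.
  intros SF SX SY SZ Sa Sb Sg H u v Hd.
  assert (E : dd b F0 u v = dd b (fun u v => F0 u v + c) u v).
  { rewrite (dd_plus r b F0 (fun _ _ => c)); auto using SmN_const. rewrite dd_const; ring. }
  rewrite E, (dd_ext r b _ _ H u v Hd).
  rewrite (dd_plus r b); [| sm0 | sm0 | auto].
  rewrite (dd_plus r b); [| sm0 | sm0 | auto].
  rewrite (dd_mult r b al X); [| sm0 | sm0 | auto].
  rewrite (dd_mult r b be Y); [| sm0 | sm0 | auto].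
  rewrite (dd_mult r b ga Z); [| sm0 | sm0 | auto].
  reflexivity.
Qed.

Lemma key (T U V W : vec) x1 y1 x2 y2 x3 y3 p1 p2 p3 q1 q2 q3 s1 s2 s3 t1 t2 t3 :
  det3 U V W <> 0 -> T = comb t1 t2 t3 U V W ->
  vx T = (x1 * vx U + y1 * vx (comb p1 p2 p3 U V W)) + (x2 * vx V + y2 * vx (comb q1 q2 q3 U V W))
         + (x3 * vx W + y3 * vx (comb s1 s2 s3 U V W)) ->
  vy T = (x1 * vy U + y1 * vy (comb p1 p2 p3 U V W)) + (x2 * vy V + y2 * vy (comb q1 q2 q3 U V W))
         + (x3 * vy W + y3 * vy (comb s1 s2 s3 U V W)) ->
  vz T = (x1 * vz U + y1 * vz (comb p1 p2 p3 U V W)) + (x2 * vz V + y2 * vz (comb q1 q2 q3 U V W))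
         + (x3 * vz W + y3 * vz (comb s1 s2 s3 U V W)) ->
  t1 = x1 + y1 * p1 + y2 * q1 + y3 * s1 /\ t2 = y1 * p2 + x2 + y2 * q2 + y3 * s2 /\
  t3 = y1 * p3 + y2 * q3 + x3 + y3 * s3.
Proof.
  intros HD HT hx hy hz. apply (solve3 _ _ _ _ _ _ U V W HD).
  rewrite <- HT. apply vec_eq; [rewrite hx|rewrite hy|rewrite hz];
  unfold comb, vadd, vscal; cbn [vx vy vz fst snd]; ring.
Qed.

Lemma comb_U U V W : U = comb 1 0 0 U V W.
Proof.
  destruct U as [[u1 u2] u3], V as [[v1 v2] v3], W as [[w1 w2] w3].
  unfold comb, vadd, vscal, vx, vy, vz; simpl; f_equal; [f_equal|]; ring.
Qed.
Lemma comb_V U V W : V = comb 0 1 0 U V W.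
Proof.
  destruct U as [[u1 u2] u3], V as [[v1 v2] v3], W as [[w1 w2] w3].
  unfold comb, vadd, vscal, vx, vy, vz; simpl; f_equal; [f_equal|]; ring.
Qed.

Lemma final_jet r k g g0 rho B al X be Y w : 0 < r ->
  Sm r g -> Sm r rho -> Sm r B -> Sm r al -> Sm r X -> Sm r be -> Sm r Y ->
  g 0 0 = g0 -> V (S k) al -> V (S k) be -> V k B -> (length w <= k)%nat ->
  dword w (fun u v => - (g u v * rho u v * B u v) + al u v * X u v + be u v * Y u v) 0 0
  = - (g0 * rho 0 0) * dword w B 0 0.
Proof.
  intros Hr Sg Sr SB Sa SX Sb SY G0 Va Vb VB Hw.
  pose proof (disc0 r Hr) as D0.
  assert (S1 : Sm r (fun u v => g u v * rho u v - g0 * rho 0 0)) by smt.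
  rewrite (dword_ext r w _ (fun u v =>
     (fun u v => (fun u v => - (g0 * rho 0 0) * B u v) u v
        + (fun u v => - ((fun u v => g u v * rho u v - g0 * rho 0 0) u v * B u v)) u v) u v
     + (fun u v => al u v * X u v) u v + (fun u v => be u v * Y u v) u v)); auto;
    [| intros u v _; ring].
  rewrite (dw_plus r); auto; [| smt | smt].
  rewrite (dw_plus r); auto; [| smt | smt].
  rewrite (dw_plus r); auto; [| smt | smt].
  rewrite (dw_scal r); auto.
  rewrite (dw_opp r); auto; [|smt].
  assert (V1 : V 1 (fun u v => g u v * rho u v - g0 * rho 0 0)).
  { intros w1 Hw1. destruct w1; [simpl; rewrite G0; ring | simpl in Hw1; lia]. }
  rewrite (V_mult r _ _ 1 k Hr S1 SB V1 VB); [|lia].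
  rewrite (V_mult r _ _ (S k) 0 Hr Sa SX Va (V0 X)); [|lia].
  rewrite (V_mult r _ _ (S k) 0 Hr Sb SY Vb (V0 Y)); [|lia].
  ring.
Qed.

Lemma vec_dd r b (f xi : vfun) q (al be ga : sfun) : Vsm r f -> Vsm r xi -> Sm r al -> Sm r be -> Sm r ga ->
  (forall u v, coord_disc r u v ->
     gvec f q u v = comb (al u v) (be u v) (ga u v) (vdu f u v) (vdv f u v) (xi u v)) ->
  forall u v, coord_disc r u v ->
  dd b (compx f) u v = (dd b al u v * compx (vdu f) u v + al u v * dd b (compx (vdu f)) u v)
     + (dd b be u v * compx (vdv f) u v + be u v * dd b (compx (vdv f)) u v)
     + (dd b ga u v * compx xi u v + ga u v * dd b (compx xi) u v) /\
  dd b (compy f) u v = (dd b al u v * compy (vdu f) u v + al u v * dd b (compy (vdu f)) u v)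
     + (dd b be u v * compy (vdv f) u v + be u v * dd b (compy (vdv f)) u v)
     + (dd b ga u v * compy xi u v + ga u v * dd b (compy xi) u v) /\
  dd b (compz f) u v = (dd b al u v * compz (vdu f) u v + al u v * dd b (compz (vdu f)) u v)
     + (dd b be u v * compz (vdv f) u v + be u v * dd b (compz (vdv f)) u v)
     + (dd b ga u v * compz xi u v + ga u v * dd b (compz xi) u v).
Proof.
  intros Vf Vx Sa Sb Sg Dg u v Hd.
  destruct Vf as [F1 [F2 F3]]. destruct Vx as [X1 [X2 X3]].
  split; [|split].
  - assert (HH : onD r (fun u v => compx f u v + (-1 * vx q))
       (fun u v => al u v * compx (vdu f) u v + be u v * compx (vdv f) u v + ga u v * compx xi u v)).
    { intros s t Hst. exact (f_equal vx (Dg s t Hst)). }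
    exact (comp_dd r b (compx f) (compx (vdu f)) (compx (vdv f)) (compx xi) al be ga (-1 * vx q)
      F1 (Sm_du r _ F1) (Sm_dv r _ F1) X1 Sa Sb Sg HH u v Hd).
  - assert (HH : onD r (fun u v => compy f u v + (-1 * vy q))
       (fun u v => al u v * compy (vdu f) u v + be u v * compy (vdv f) u v + ga u v * compy xi u v)).
    { intros s t Hst. exact (f_equal vy (Dg s t Hst)). }
    exact (comp_dd r b (compy f) (compy (vdu f)) (compy (vdv f)) (compy xi) al be ga (-1 * vy q)
      F2 (Sm_du r _ F2) (Sm_dv r _ F2) X2 Sa Sb Sg HH u v Hd).
  - assert (HH : onD r (fun u v => compz f u v + (-1 * vz q))
       (fun u v => al u v * compz (vdu f) u v + be u v * compz (vdv f) u v + ga u v * compz xi u v)).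
    { intros s t Hst. exact (f_equal vz (Dg s t Hst)). }
    exact (comp_dd r b (compz f) (compz (vdu f)) (compz (vdv f)) (compz xi) al be ga (-1 * vz q)
      F3 (Sm_du r _ F3) (Sm_dv r _ F3) X3 Sa Sb Sg HH u v Hd).
Qed.

Lemma Dpart_dword i j F : Dpart i j F = dword (repeat true i ++ repeat false j) F.
Proof.
  unfold Dpart. induction i as [|i IH]; simpl.
  - induction j as [|j IHj]; simpl; auto. rewrite IHj; reflexivity.
  - rewrite IH; reflexivity.
Qed.

Lemma dd_opp r b F : Sm r F -> onD r (dd b (fun u v => - F u v)) (fun u v => - dd b F u v).
Proof. intros HF u v Hd. pose proof (dw_opp r [b] F HF u v Hd) as H. destruct b; exact H. Qed.

Lemma dot_dd r b (N X : vfun) : Vsm r N -> Vsm r X -> forall u v, coord_disc r u v ->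
  dd b (fun u v => dot (N u v) (X u v)) u v =
  dot (dd b (compx N) u v, dd b (compy N) u v, dd b (compz N) u v) (X u v)
  + dot (N u v) (dd b (compx X) u v, dd b (compy X) u v, dd b (compz X) u v).
Proof.
  intros [N1 [N2 N3]] [X1 [X2 X3]] u v Hd.
  rewrite (dd_ext r b _ (fun u v => (compx N u v * compx X u v + compy N u v * compy X u v) + compz N u v * compz X u v)); [|intros s t _; reflexivity|auto].
  rewrite (dd_plus r b); [| sm0 | sm0 | auto].
  rewrite (dd_plus r b); [| sm0 | sm0 | auto].
  rewrite (dd_mult r b (compx N)); [| sm0 | sm0 | auto].
  rewrite (dd_mult r b (compy N)); [| sm0 | sm0 | auto].
  rewrite (dd_mult r b (compz N)); [| sm0 | sm0 | auto].
  unfold dot, compx, compy, compz; cbn [vx vy vz fst snd]. ring.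
Qed.

Lemma dd_locconst r b (F : sfun) c u v : onD r F (fun _ _ => c) -> coord_disc r u v -> dd b F u v = 0.
Proof. intros H Hd. rewrite (dd_ext r b _ _ H u v Hd). apply dd_const. Qed.

Theorem proposition4p4
  (r : R) (f xi nu : vfun) (rho b11 b12 b21 b22 : sfun) (k : nat) :
  0 < r ->
  vsmooth_on r f -> vsmooth_on r xi ->
  (forall u v, coord_disc r u v -> det3 (vdu f u v) (vdv f u v) (xi u v) <> 0) ->
  (forall u v, coord_disc r u v -> 0 < rho u v) ->
  (forall u v, coord_disc r u v -> exists a c : R,
     vdu (vdu f) u v = vadd (vadd (vscal a (vdu f u v)) (vscal c (vdv f u v)))
                            (vscal (rho u v) (xi u v))) ->
  (forall u v, coord_disc r u v -> exists a c : R,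
     vdv (vdv f) u v = vadd (vadd (vscal a (vdu f u v)) (vscal c (vdv f u v)))
                            (vscal (rho u v) (xi u v))) ->
  (forall u v, coord_disc r u v -> exists a c : R,
     vdv (vdu f) u v = vadd (vadd (vscal a (vdu f u v)) (vscal c (vdv f u v)))
                            (vscal 0 (xi u v))) ->
  (forall u v, coord_disc r u v ->
     vdu xi u v = vadd (vscal (- b11 u v) (vdu f u v)) (vscal (- b21 u v) (vdv f u v))) ->
  (forall u v, coord_disc r u v ->
     vdv xi u v = vadd (vscal (- b12 u v) (vdu f u v)) (vscal (- b22 u v) (vdv f u v))) ->
  (forall u v, coord_disc r u v -> b12 u v = b21 u v) ->
  b11 0 0 = b22 0 0 -> b12 0 0 = 0 ->
  jet_vanishes_below k (fun u v => b11 u v - b22 u v) (fun u v => 2 * b12 u v) ->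
  b11 0 0 <> 0 ->
  (forall u v, coord_disc r u v ->
     dot (nu u v) (vdu f u v) = 0 /\ dot (nu u v) (vdv f u v) = 0 /\
     dot (nu u v) (xi u v) = 1) ->
  let lambda0 := b11 0 0 in
  let q0 := vadd (f 0 0) (vscal (/ lambda0) (xi 0 0)) in
  let p : sfun := fun u v => dot (nu u v) (vadd (f u v) (vscal (-1) q0)) in
  let delta0 := det3 (vdu f 0 0) (vdv f 0 0) (xi 0 0)
                 * det3 (nu 0 0) (vdu nu 0 0) (vdv nu 0 0) / rho 0 0 in
  jet_eq_scaled k
    (fun u v => du (du p) u v - dv (dv p) u v) (fun u v => 2 * dv (du p) u v)
    (/ lambda0 * delta0)
    (fun u v => b11 u v - b22 u v) (fun u v => 2 * b12 u v).
Proof.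
  intros Hr Hf Hxi Hdet Hrho Huu Hvv Huv Hxu Hxv Hb Hum1 Hum2 Hjet Hl0 Hnu lambda0 q0 p delta0.
  pose proof (disc0 r Hr) as D0.
  pose proof (Vsm_of r f Hf) as Vf. pose proof (Vsm_of r xi Hxi) as Vx.
  assert (HD : forall u v, coord_disc r u v -> Dt f xi u v <> 0) by exact Hdet.
  pose proof (Vsm_du r f Vf) as Vfu. pose proof (Vsm_dv r f Vf) as Vfv.
  pose proof (Vsm_du r _ Vfu) as Vfuu. pose proof (Vsm_dv r _ Vfv) as Vfvv.
  pose proof (Vsm_dv r _ Vfu) as Vfuv.
  pose proof (Vsm_du r _ Vx) as Vxu. pose proof (Vsm_dv r _ Vx) as Vxv.
  pose proof (Vsm_g r f q0 Vf) as Vg.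
  set (AL := cA f xi (gvec f q0)). set (BE := cB f xi (gvec f q0)). set (GA := cC f xi (gvec f q0)).
  set (A1 := cA f xi (vdu (vdu f))). set (C1 := cB f xi (vdu (vdu f))).
  set (A2 := cA f xi (vdv (vdv f))). set (C2 := cB f xi (vdv (vdv f))).
  set (A3 := cA f xi (vdv (vdu f))). set (C3 := cB f xi (vdv (vdu f))).
  assert (SAL : Sm r AL) by (apply Sm_cA; auto).
  assert (SBE : Sm r BE) by (apply Sm_cB; auto).
  assert (SGA : Sm r GA) by (apply Sm_cC; auto).
  assert (SA1 : Sm r A1) by (apply Sm_cA; auto).
  assert (SC1 : Sm r C1) by (apply Sm_cB; auto).
  assert (SA2 : Sm r A2) by (apply Sm_cA; auto).
  assert (SC2 : Sm r C2) by (apply Sm_cB; auto).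
  assert (SA3 : Sm r A3) by (apply Sm_cA; auto).
  assert (SC3 : Sm r C3) by (apply Sm_cB; auto).
  assert (PUU : forall u v, coord_disc r u v ->
     vdu (vdu f) u v = comb (A1 u v) (C1 u v) (rho u v) (vdu f u v) (vdv f u v) (xi u v) /\
     rho u v = cC f xi (vdu (vdu f)) u v).
  { intros u v Hd. destruct (Huu u v Hd) as [a [c H]].
    destruct (coef_pt f xi (vdu (vdu f)) u v a c (rho u v) (HD u v Hd) H) as [E1 [E2 E3]].
    split; auto. rewrite H, E1, E2. reflexivity. }
  assert (PVV : forall u v, coord_disc r u v ->
     vdv (vdv f) u v = comb (A2 u v) (C2 u v) (rho u v) (vdu f u v) (vdv f u v) (xi u v)).
  { intros u v Hd. destruct (Hvv u v Hd) as [a [c H]].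
    destruct (coef_pt f xi (vdv (vdv f)) u v a c (rho u v) (HD u v Hd) H) as [E1 [E2 E3]].
    rewrite H, E1, E2. reflexivity. }
  assert (PUV : forall u v, coord_disc r u v ->
     vdv (vdu f) u v = comb (A3 u v) (C3 u v) 0 (vdu f u v) (vdv f u v) (xi u v)).
  { intros u v Hd. destruct (Huv u v Hd) as [a [c H]].
    destruct (coef_pt f xi (vdv (vdu f)) u v a c 0 (HD u v Hd) H) as [E1 [E2 E3]].
    rewrite H, E1, E2. reflexivity. }
  assert (PXU : forall u v, coord_disc r u v ->
     vdu xi u v = comb (- b11 u v) (- b12 u v) 0 (vdu f u v) (vdv f u v) (xi u v) /\
     - b11 u v = cA f xi (vdu xi) u v).
  { intros u v Hd. pose proof (Hxu u v Hd) as H. rewrite (comb2 _ _ _ _ (xi u v)), <- (Hb u v Hd) in H.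
    destruct (coef_pt f xi (vdu xi) u v _ _ _ (HD u v Hd) H) as [E1 [E2 E3]]. auto. }
  assert (PXV : forall u v, coord_disc r u v ->
     vdv xi u v = comb (- b12 u v) (- b22 u v) 0 (vdu f u v) (vdv f u v) (xi u v) /\
     - b12 u v = cA f xi (vdv xi) u v /\ - b22 u v = cB f xi (vdv xi) u v).
  { intros u v Hd. pose proof (Hxv u v Hd) as H. rewrite (comb2 _ _ _ _ (xi u v)) in H.
    destruct (coef_pt f xi (vdv xi) u v _ _ _ (HD u v Hd) H) as [E1 [E2 E3]]. auto. }
  assert (Srho : Sm r rho).
  { apply Sm_ext with (cC f xi (vdu (vdu f))); [|apply Sm_cC; auto].
    intros u v Hd. symmetry; apply PUU; auto. }
  assert (Sb11 : Sm r b11).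
  { apply Sm_ext with (fun u v => - cA f xi (vdu xi) u v); [|apply Sm_opp; apply Sm_cA; auto].
    intros u v Hd. destruct (PXU u v Hd) as [_ E]. lra. }
  assert (Sb12 : Sm r b12).
  { apply Sm_ext with (fun u v => - cA f xi (vdv xi) u v); [|apply Sm_opp; apply Sm_cA; auto].
    intros u v Hd. destruct (PXV u v Hd) as [_ [E _]]. lra. }
  assert (Sb22 : Sm r b22).
  { apply Sm_ext with (fun u v => - cB f xi (vdv xi) u v); [|apply Sm_opp; apply Sm_cB; auto].
    intros u v Hd. destruct (PXV u v Hd) as [_ [_ E]]. lra. }
  assert (Dg : forall u v, coord_disc r u v ->
     gvec f q0 u v = comb (AL u v) (BE u v) (GA u v) (vdu f u v) (vdv f u v) (xi u v)).
  { intros u v Hd. apply decomp_pt; auto. }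
  assert (EU : forall u v, coord_disc r u v ->
     du AL u v = 1 + GA u v * b11 u v - AL u v * A1 u v - BE u v * A3 u v /\
     du BE u v = 0 + GA u v * b12 u v - AL u v * C1 u v - BE u v * C3 u v /\
     du GA u v = - (AL u v * rho u v)).
  { intros u v Hd.
    destruct (vec_dd r true f xi q0 AL BE GA Vf Vx SAL SBE SGA Dg u v Hd) as [hx [hy hz]].
    cbn [dd] in hx, hy, hz.
    destruct Vf as [F1 [F2 F3]].
    assert (SWx : du (compx (vdv f)) u v = compx (vdv (vdu f)) u v).
    { change (du (dv (compx f)) u v = dv (du (compx f)) u v). apply (Sm_schwarz r); auto. }
    assert (SWy : du (compy (vdv f)) u v = compy (vdv (vdu f)) u v).
    { change (du (dv (compy f)) u v = dv (du (compy f)) u v). apply (Sm_schwarz r); auto. }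
    assert (SWz : du (compz (vdv f)) u v = compz (vdv (vdu f)) u v).
    { change (du (dv (compz f)) u v = dv (du (compz f)) u v). apply (Sm_schwarz r); auto. }
    rewrite SWx in hx. rewrite SWy in hy. rewrite SWz in hz.
    destruct (PUU u v Hd) as [E1 _]. pose proof (PUV u v Hd) as E2. destruct (PXU u v Hd) as [E3 _].
    destruct (key (vdu f u v) (vdu f u v) (vdv f u v) (xi u v) (du AL u v) (AL u v) (du BE u v) (BE u v)
       (du GA u v) (GA u v) (A1 u v) (C1 u v) (rho u v) (A3 u v) (C3 u v) 0 (- b11 u v) (- b12 u v) 0
       1 0 0 (HD u v Hd) (comb_U _ _ _)) as [K1 [K2 K3]].
    - rewrite <- E1, <- E2, <- E3. exact hx.
    - rewrite <- E1, <- E2, <- E3. exact hy.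
    - rewrite <- E1, <- E2, <- E3. exact hz.
    - split; [|split]; lra. }
  assert (EV : forall u v, coord_disc r u v ->
     dv AL u v = 0 + GA u v * b12 u v - AL u v * A3 u v - BE u v * A2 u v /\
     dv BE u v = 1 + GA u v * b22 u v - AL u v * C3 u v - BE u v * C2 u v /\
     dv GA u v = - (BE u v * rho u v)).
  { intros u v Hd.
    destruct (vec_dd r false f xi q0 AL BE GA Vf Vx SAL SBE SGA Dg u v Hd) as [hx [hy hz]].
    cbn [dd] in hx, hy, hz.
    pose proof (PVV u v Hd) as E1. pose proof (PUV u v Hd) as E2. destruct (PXV u v Hd) as [E3 _].
    destruct (key (vdv f u v) (vdu f u v) (vdv f u v) (xi u v) (dv AL u v) (AL u v) (dv BE u v) (BE u v)
       (dv GA u v) (GA u v) (A3 u v) (C3 u v) 0 (A2 u v) (C2 u v) (rho u v) (- b12 u v) (- b22 u v) 0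
       0 1 0 (HD u v Hd) (comb_V _ _ _)) as [K1 [K2 K3]].
    - rewrite <- E1, <- E2, <- E3. exact hx.
    - rewrite <- E1, <- E2, <- E3. exact hy.
    - rewrite <- E1, <- E2, <- E3. exact hz.
    - split; [|split]; lra. }
  assert (G0 : gvec f q0 0 0 = comb 0 0 (- / lambda0) (vdu f 0 0) (vdv f 0 0) (xi 0 0)).
  { unfold gvec, q0, comb, vadd, vscal. apply vec_eq; cbn [vx vy vz fst snd]; ring. }
  destruct (coef_pt f xi (gvec f q0) 0 0 _ _ _ (HD 0 0 D0) G0) as [AL0 [BE0 GA0]].
  fold AL in AL0. fold BE in BE0. fold GA in GA0.
  assert (Vb : V k (fun u v => b11 u v - b22 u v) /\ V k b12).
  { destruct (jet_V r k _ _ Hr (Sm_minus r _ _ Sb11 Sb22) (Sm_mult r _ _ (Sm_const r 2) Sb12) Hjet) as [V1 V2].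
    split; auto. intros w Hw. pose proof (V2 w Hw) as H.
    rewrite (dw_scal r w 2 b12 Sb12 0 0 D0) in H. lra. }
  destruct Vb as [VB1 VB2].
  destruct (jet_core r k AL BE GA rho b11 b12 b22 A1 A2 A3 C1 C2 C3 (- / lambda0) Hr
     SAL SBE SGA Srho Sb11 Sb12 Sb22 SA1 SA2 SA3 SC1 SC2 SC3) as [VAL VBE].
  - intros u v Hd; exact (proj1 (EU u v Hd)).
  - intros u v Hd; exact (proj1 (proj2 (EU u v Hd))).
  - intros u v Hd; exact (proj2 (proj2 (EU u v Hd))).
  - intros u v Hd; exact (proj1 (EV u v Hd)).
  - intros u v Hd; exact (proj1 (proj2 (EV u v Hd))).
  - intros u v Hd; exact (proj2 (proj2 (EV u v Hd))).
  - symmetry; exact GA0.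
  - apply Ropp_neq_0_compat; apply Rinv_neq_0_compat; exact Hl0.
  - unfold lambda0. assert (Hinv : / b11 0 0 * b11 0 0 = 1) by (apply Rinv_l; exact Hl0).
    transitivity (1 - / b11 0 0 * b11 0 0); [ring | rewrite Hinv; ring].
  - symmetry; exact AL0.
  - symmetry; exact BE0.
  - exact VB1.
  - exact VB2.
  -
    assert (Vnu : Vsm r nu).
    { destruct Vfu as [U1 [U2 U3]]. destruct Vfv as [W1 [W2 W3]].
      assert (SI : Sm r (fun u v => / Dt f xi u v)) by (apply Sm_inv; auto; apply Sm_Dt; auto).
      assert (NE : forall u v, coord_disc r u v -> nu u v = vscal (/ Dt f xi u v) (cross (vdu f u v) (vdv f u v))).
      { intros u v Hd. destruct (Hnu u v Hd) as [n1 [n2 n3]]. apply conormal_eq; auto. }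
      split; [|split].
      - apply Sm_ext with (fun u v => / Dt f xi u v * (vy (vdu f u v) * vz (vdv f u v) - vz (vdu f u v) * vy (vdv f u v))).
        + intros u v Hd. unfold compx, compy, compz. rewrite (NE u v Hd). reflexivity.
        + apply Sm_mult; auto. unfold compx, compy, compz in *. smt.
      - apply Sm_ext with (fun u v => / Dt f xi u v * (vz (vdu f u v) * vx (vdv f u v) - vx (vdu f u v) * vz (vdv f u v))).
        + intros u v Hd. unfold compx, compy, compz. rewrite (NE u v Hd). reflexivity.
        + apply Sm_mult; auto. unfold compx, compy, compz in *. smt.
      - apply Sm_ext with (fun u v => / Dt f xi u v * (vx (vdu f u v) * vy (vdv f u v) - vy (vdu f u v) * vx (vdv f u v))).
        + intros u v Hd. unfold compx, compy, compz. rewrite (NE u v Hd). reflexivity.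
        + apply Sm_mult; auto. unfold compx, compy, compz in *. smt. }
    destruct (Hnu 0 0 D0) as [N1 [N2 N3]].
    assert (CU : onD r (fun u v => dot (nu u v) (vdu f u v)) (fun _ _ => 0)) by (intros u v Hd; apply Hnu; auto).
    assert (CV : onD r (fun u v => dot (nu u v) (vdv f u v)) (fun _ _ => 0)) by (intros u v Hd; apply Hnu; auto).
    assert (CX : onD r (fun u v => dot (nu u v) (xi u v)) (fun _ _ => 1)) by (intros u v Hd; apply Hnu; auto).
    destruct (PUU 0 0 D0) as [Q1 _]. pose proof (PVV 0 0 D0) as Q2. pose proof (PUV 0 0 D0) as Q3.
    destruct (PXU 0 0 D0) as [Q4 _]. destruct (PXV 0 0 D0) as [Q5 _].
    assert (SW0 : (du (compx (vdv f)) 0 0, du (compy (vdv f)) 0 0, du (compz (vdv f)) 0 0) = vdv (vdu f) 0 0).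
    { destruct Vf as [F1 [F2 F3]].
      change (vdv (vdu f) 0 0) with (dv (compx (vdu f)) 0 0, dv (compy (vdu f)) 0 0, dv (compz (vdu f)) 0 0).
      f_equal; [f_equal|].
      - change (du (dv (compx f)) 0 0 = dv (du (compx f)) 0 0). apply (Sm_schwarz r); auto.
      - change (du (dv (compy f)) 0 0 = dv (du (compy f)) 0 0). apply (Sm_schwarz r); auto.
      - change (du (dv (compz f)) 0 0 = dv (du (compz f)) 0 0). apply (Sm_schwarz r); auto. }
    pose proof (dot_dd r true nu (vdu f) Vnu Vfu 0 0 D0) as d1.
    pose proof (dot_dd r true nu (vdv f) Vnu Vfv 0 0 D0) as d2.
    pose proof (dot_dd r true nu xi Vnu Vx 0 0 D0) as d3.
    pose proof (dot_dd r false nu (vdu f) Vnu Vfu 0 0 D0) as d4.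
    pose proof (dot_dd r false nu (vdv f) Vnu Vfv 0 0 D0) as d5.
    pose proof (dot_dd r false nu xi Vnu Vx 0 0 D0) as d6.
    rewrite (dd_locconst r true _ 0 0 0 CU D0) in d1.
    rewrite (dd_locconst r true _ 0 0 0 CV D0) in d2.
    rewrite (dd_locconst r true _ 1 0 0 CX D0) in d3.
    rewrite (dd_locconst r false _ 0 0 0 CU D0) in d4.
    rewrite (dd_locconst r false _ 0 0 0 CV D0) in d5.
    rewrite (dd_locconst r false _ 1 0 0 CX D0) in d6.
    cbn [dd] in d1, d2, d3, d4, d5, d6.
    change (0 = dot (vdu nu 0 0) (vdu f 0 0) + dot (nu 0 0) (vdu (vdu f) 0 0)) in d1.
    change (0 = dot (vdu nu 0 0) (vdv f 0 0) + dot (nu 0 0) (du (compx (vdv f)) 0 0, du (compy (vdv f)) 0 0, du (compz (vdv f)) 0 0)) in d2.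
    change (0 = dot (vdu nu 0 0) (xi 0 0) + dot (nu 0 0) (vdu xi 0 0)) in d3.
    change (0 = dot (vdv nu 0 0) (vdu f 0 0) + dot (nu 0 0) (vdv (vdu f) 0 0)) in d4.
    change (0 = dot (vdv nu 0 0) (vdv f 0 0) + dot (nu 0 0) (vdv (vdv f) 0 0)) in d5.
    change (0 = dot (vdv nu 0 0) (xi 0 0) + dot (nu 0 0) (vdv xi 0 0)) in d6.
    rewrite SW0 in d2.
    rewrite Q1, dot_comb, N1, N2, N3 in d1.
    rewrite Q3, dot_comb, N1, N2, N3 in d2.
    rewrite Q4, dot_comb, N1, N2, N3 in d3.
    rewrite Q3, dot_comb, N1, N2, N3 in d4.
    rewrite Q2, dot_comb, N1, N2, N3 in d5.
    rewrite Q5, dot_comb, N1, N2, N3 in d6.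
    assert (Bn := binet (nu 0 0) (vdu nu 0 0) (vdv nu 0 0) (vdu f 0 0) (vdv f 0 0) (xi 0 0)).
    replace (dot (vdu nu 0 0) (vdu f 0 0)) with (- rho 0 0) in Bn by lra.
    replace (dot (vdu nu 0 0) (vdv f 0 0)) with 0 in Bn by lra.
    replace (dot (vdu nu 0 0) (xi 0 0)) with 0 in Bn by lra.
    replace (dot (vdv nu 0 0) (vdu f 0 0)) with 0 in Bn by lra.
    replace (dot (vdv nu 0 0) (vdv f 0 0)) with (- rho 0 0) in Bn by lra.
    replace (dot (vdv nu 0 0) (xi 0 0)) with 0 in Bn by lra.
    rewrite N1, N2, N3 in Bn.
    assert (Hdelta : delta0 = rho 0 0).
    { unfold delta0. pose proof (Hrho 0 0 D0) as R0.
      unfold det3 at 1 in Bn. cbn [vx vy vz fst snd] in Bn.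
      rewrite Rmult_comm. apply Rmult_eq_reg_r with (rho 0 0); [|lra].
      unfold Rdiv. rewrite Rmult_assoc, Rinv_l by lra. lra. }
    assert (pGA : onD r p GA).
    { intros u v Hd. unfold p.
      change (dot (nu u v) (gvec f q0 u v) = GA u v).
      rewrite (Dg u v Hd), dot_comb. destruct (Hnu u v Hd) as [n1 [n2 n3]].
      rewrite n1, n2, n3. ring. }
    assert (SARo : Sm r (fun u v => AL u v * rho u v)) by (apply (Sm_mult r AL rho); auto).
    assert (SBRo : Sm r (fun u v => BE u v * rho u v)) by (apply (Sm_mult r BE rho); auto).
    assert (DDu : forall u v, coord_disc r u v -> du (du p) u v =
       - ((1 + GA u v * b11 u v - AL u v * A1 u v - BE u v * A3 u v) * rho u v + AL u v * du rho u v)).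
    { intros u v Hd.
      transitivity (du (du GA) u v). { exact (dd_ext r true _ _ (dd_ext r true _ _ pGA) u v Hd). }
      transitivity (du (fun u v => - (AL u v * rho u v)) u v).
      { exact (dd_ext r true _ _ (fun s t H => proj2 (proj2 (EU s t H))) u v Hd). }
      transitivity (- du (fun u v => AL u v * rho u v) u v). { exact (dd_opp r true _ SARo u v Hd). }
      transitivity (- (du AL u v * rho u v + AL u v * du rho u v)).
      { f_equal. exact (dd_mult r true AL rho (SAL 0%nat) (Srho 0%nat) u v Hd). }
      rewrite (proj1 (EU u v Hd)). reflexivity. }
    assert (DDv : forall u v, coord_disc r u v -> dv (dv p) u v =
       - ((1 + GA u v * b22 u v - AL u v * C3 u v - BE u v * C2 u v) * rho u v + BE u v * dv rho u v)).
    { intros u v Hd.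
      transitivity (dv (dv GA) u v). { exact (dd_ext r false _ _ (dd_ext r false _ _ pGA) u v Hd). }
      transitivity (dv (fun u v => - (BE u v * rho u v)) u v).
      { exact (dd_ext r false _ _ (fun s t H => proj2 (proj2 (EV s t H))) u v Hd). }
      transitivity (- dv (fun u v => BE u v * rho u v) u v). { exact (dd_opp r false _ SBRo u v Hd). }
      transitivity (- (dv BE u v * rho u v + BE u v * dv rho u v)).
      { f_equal. exact (dd_mult r false BE rho (SBE 0%nat) (Srho 0%nat) u v Hd). }
      rewrite (proj1 (proj2 (EV u v Hd))). reflexivity. }
    assert (DUV : forall u v, coord_disc r u v -> dv (du p) u v =
       - ((0 + GA u v * b12 u v - AL u v * A3 u v - BE u v * A2 u v) * rho u v + AL u v * dv rho u v)).
    { intros u v Hd.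
      transitivity (dv (du GA) u v). { exact (dd_ext r false _ _ (dd_ext r true _ _ pGA) u v Hd). }
      transitivity (dv (fun u v => - (AL u v * rho u v)) u v).
      { exact (dd_ext r false _ _ (fun s t H => proj2 (proj2 (EU s t H))) u v Hd). }
      transitivity (- dv (fun u v => AL u v * rho u v) u v). { exact (dd_opp r false _ SARo u v Hd). }
      transitivity (- (dv AL u v * rho u v + AL u v * dv rho u v)).
      { f_equal. exact (dd_mult r false AL rho (SAL 0%nat) (Srho 0%nat) u v Hd). }
      rewrite (proj1 (EV u v Hd)). reflexivity. }
    assert (Hc : - (- / lambda0 * rho 0 0) = / lambda0 * delta0) by (rewrite Hdelta; ring).
    assert (Sdu : Sm r (du rho)) by (apply Sm_du; auto).
    assert (Sdv : Sm r (dv rho)) by (apply Sm_dv; auto).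
    unfold jet_eq_scaled. intros i j Hij. rewrite !Dpart_dword.
    set (w := repeat true i ++ repeat false j).
    assert (Hw : (length w <= k)%nat) by (unfold w; rewrite length_app, !repeat_length; lia).
    split.
    + rewrite (dword_ext r w _ (fun u v => - (GA u v * rho u v * (fun u v => b11 u v - b22 u v) u v)
          + AL u v * (fun u v => A1 u v * rho u v - du rho u v - C3 u v * rho u v) u v
          + BE u v * (fun u v => A3 u v * rho u v - C2 u v * rho u v + dv rho u v) u v)); auto.
      2: { intros u v Hd. rewrite (DDu u v Hd), (DDv u v Hd). ring. }
      rewrite (final_jet r k GA (- / lambda0) rho _ AL _ BE _ w Hr SGA Srho); auto; try (symmetry; exact GA0).
      * rewrite Hc. reflexivity.
      * apply Sm_minus; auto.
      * smt.
      * smt.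
    + rewrite (dword_ext r w (fun u v => 2 * dv (du p) u v) (fun u v => - (GA u v * rho u v * (fun u v => 2 * b12 u v) u v)
          + AL u v * (fun u v => 2 * A3 u v * rho u v - 2 * dv rho u v) u v
          + BE u v * (fun u v => 2 * A2 u v * rho u v) u v)); auto.
      2: { intros u v Hd. rewrite (DUV u v Hd). ring. }
      rewrite (final_jet r k GA (- / lambda0) rho _ AL _ BE _ w Hr SGA Srho); auto; try (symmetry; exact GA0).
      * rewrite Hc. reflexivity.
      * apply Sm_mult; auto. apply Sm_const.
      * smt.
      * smt.
      * intros w1 Hw1. rewrite (dw_scal r); auto. rewrite VB2; auto. ring.
Qed.
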